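(* Let $k\ge1$ and $B>2$ be constants and let $(\alpha_L^*,\alpha_R^* )$ be the fixed point of $F$ (equivalently, the solution in $(1/2,1)^2$ of $\exp(B\sqrt k(1-2\alpha_R))=\frac{1-\alpha_L}{\alpha_L}$, $\exp(\frac{B}{\sqrt k}(1-2\alpha_L))=\frac{1-\alpha_R}{\alpha_R}$). Then $(1-\alpha_L^* )(1-\alpha_R^* )B^2<1$.
   Context: The map $F$: for $(\alpha_L,\alpha_R)\in[0,1]^2$, if $\sqrt{\alpha_L\alpha_R}\,B\le1$ set $(\theta_L,\theta_R)=(0,0)$; otherwise let $(\theta_L,\theta_R)$ be the unique solution with $\theta_L,\theta_R>0$ of $\exp(-B\sqrt k\,\alpha_R\theta_R)=1-\theta_L$ and $\exp(-\frac{B}{\sqrt k}\alpha_L\theta_L)=1-\theta_R$. Then $F(\alpha_L,\alpha_R)=\big(\tfrac12(1+\theta_L\alpha_L),\tfrac12(1+\theta_R\alpha_R)\big)$. *)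

(* Defs.v *)
From Stdlib Require Import Reals Lra.
Open Scope R_scope.

(* Graph of the map F (parameters k, B):  F_graph k B aL aR bL bR  means
   F(aL, aR) = (bL, bR).  If sqrt(aL aR) B <= 1 then theta = (0,0), so
   F(aL,aR) = (1/2, 1/2); otherwise theta = (tL,tR) is the (by the paper,
   unique) solution with tL, tR > 0 of
     exp(-B sqrt k aR tR) = 1 - tL,   exp(-(B/sqrt k) aL tL) = 1 - tR,
   and F(aL,aR) = ((1 + tL aL)/2, (1 + tR aR)/2). *)
Definition F_graph (k B aL aR bL bR : R) : Prop :=
  (sqrt (aL * aR) * B <= 1 /\ bL = 1/2 /\ bR = 1/2) \/
  (1 < sqrt (aL * aR) * B /\
   exists tL tR : R,
     0 < tL /\ 0 < tR /\
     exp (- (B * sqrt k * aR * tR)) = 1 - tL /\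
     exp (- (B / sqrt k * aL * tL)) = 1 - tR /\
     bL = (1 + tL * aL) / 2 /\ bR = (1 + tR * aR) / 2).

Definition is_fixed_point_F (k B aL aR : R) : Prop :=
  0 <= aL <= 1 /\ 0 <= aR <= 1 /\ F_graph k B aL aR aL aR.

(* Main.v *)
Require Import Defs.
From Stdlib Require Import Reals Lra Psatz.
Open Scope R_scope.

Lemma key (x t : R) : 0 < t -> exp (- x) = 1 - t -> x < t / (1 - t).
Proof.
  intros Ht E.
  assert (Hp : 0 < 1 - t) by (rewrite <- E; apply exp_pos).
  assert (H1 : 1 + t / (1 - t) < exp (t / (1 - t))).
  { assert (0 < t / (1 - t)) by (apply Rdiv_lt_0_compat; lra). apply exp_ineq1; lra. }
  assert (H2 : exp x = 1 + t / (1 - t)).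
  { assert (exp x * exp (- x) = 1) by (rewrite <- exp_plus; replace (x + - x) with 0 by ring; apply exp_0).
    rewrite E in H. field_simplify; try lra.
    apply (Rmult_eq_reg_r (1 - t)); [|lra]. rewrite H. field. lra. }
  apply exp_lt_inv. lra.
Qed.

Theorem mainTheorem15 (k B aL aR : R) :
  1 <= k -> 2 < B -> is_fixed_point_F k B aL aR ->
  (1 - aL) * (1 - aR) * B ^ 2 < 1.
Proof.
  intros Hk HB [HaL [HaR [[Hs [-> ->]] | [Hs [tL [tR [HtL [HtR [E1 [E2 [EL ER]]]]]]]]]]].
  - exfalso. replace (1/2 * (1/2)) with (/2 * /2) in Hs by field.
    rewrite sqrt_square in Hs; lra.
  - assert (Hsk : 0 < sqrt k) by (apply sqrt_lt_R0; lra).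
    assert (pL : 0 < 1 - tL) by (rewrite <- E1; apply exp_pos).
    assert (pR : 0 < 1 - tR) by (rewrite <- E2; apply exp_pos).
    apply key in E1; [|lra]. apply key in E2; [|lra].
    assert (aLp : 0 < aL) by nra. assert (aRp : 0 < aR) by nra.
    set (X := B * sqrt k * aR * tR) in *.
    set (Y := B / sqrt k * aL * tL) in *.
    assert (Xp : 0 < X) by (unfold X; repeat apply Rmult_lt_0_compat; lra).
    assert (Yp : 0 < Y) by (unfold Y; repeat apply Rmult_lt_0_compat; try lra; apply Rinv_0_lt_compat; lra).
    assert (XY : X * Y = B ^ 2 * aL * aR * tL * tR) by (unfold X, Y; field; lra).
    assert (Hm : X * Y < tL / (1 - tL) * (tR / (1 - tR))) by (apply Rmult_le_0_lt_compat; lra).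
    rewrite XY in Hm.
    assert (Q : B ^ 2 * aL * aR * (1 - tL) * (1 - tR) < 1).
    { apply (Rmult_lt_reg_r (tL * tR / ((1 - tL) * (1 - tR)))).
      - apply Rdiv_lt_0_compat; nra.
      - replace (1 * (tL * tR / ((1 - tL) * (1 - tR)))) with (tL / (1 - tL) * (tR / (1 - tR))) by (field; lra).
        replace (B ^ 2 * aL * aR * (1 - tL) * (1 - tR) * (tL * tR / ((1 - tL) * (1 - tR))))
          with (B ^ 2 * aL * aR * tL * tR) by (field; lra). exact Hm. }
    assert (1 - aL = aL * (1 - tL)) by lra.
    assert (1 - aR = aR * (1 - tR)) by lra.
    rewrite H, H0. nra.
Qed.
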